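(* Let $n\ge3$, $\alpha<1$, $q\in[1,\infty)$, $r,s\in[0,1)$, and for $\beta\in[0,\pi]$ set $$\mathcal{J}(\alpha,\beta,q,r,s)=\int_{-\pi}^{\pi}\big(1+s^2-2rs\cos\theta\big)^{\frac{(n-\alpha)q}{2}-n+1}|\cos(\theta-\beta)|^q\,d\theta.$$ (1) If $q=\frac{2n-2}{n-\alpha}$ or $q=\frac{2n}{n-\alpha}$, then $\beta\mapsto\mathcal{J}(\alpha,\beta,q,r,s)$ is constant on $[0,\pi]$. (2) If $\frac{2n-2}{n-\alpha}<q<\frac{2n}{n-\alpha}$, then $\beta\mapsto\mathcal{J}(\alpha,\beta,q,r,s)$ is increasing on $[0,\frac\pi2]$ and $\max_{\beta\in[0,\pi]}\mathcal{J}(\alpha,\beta,q,r,s)=\mathcal{J}(\alpha,\frac\pi2,q,r,s)$. (3) If $q>\frac{2n}{n-\alpha}$ or $1\le q<\frac{2n-2}{n-\alpha}$, then $\beta\mapsto\mathcal{J}(\alpha,\beta,q,r,s)$ is decreasing on $[0,\frac\pi2]$ and $\max_{\beta\in[0,\pi]}\mathcal{J}(\alpha,\beta,q,r,s)=\mathcal{J}(\alpha,0,q,r,s)$. *)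

(* Defs.v *)
From Stdlib Require Import Reals.
From Coquelicot Require Import Coquelicot.
Open Scope R_scope.

(* x^y for x >= 0 and real y, with the convention 0^y = 0 (used only for y >= 1 > 0). *)
Definition rpow (x y : R) : R := if Rle_dec x 0 then 0 else Rpower x y.

Definition Jint (n : nat) (alpha beta q r s : R) : R :=
  RInt (fun theta =>
          rpow (1 + s ^ 2 - 2 * r * s * cos theta)
               ((INR n - alpha) * q / 2 - INR n + 1)
          * rpow (Rabs (cos (theta - beta))) q)
       (- PI) PI.

(* Main.v *)
Require Import Defs.
From Stdlib Require Import Reals Lra Psatz.
From Coquelicot Require Import Coquelicot.
Open Scope R_scope.

Lemma exp_le' x y : x <= y -> exp x <= exp y.
Proof. intro h; destruct (Req_dec x y); [subst; lra|]. left; apply exp_increasing; lra. Qed.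

Lemma Rpower_cpt (y x : R) : 0 < x -> continuity_pt (fun z => Rpower z y) x.
Proof.
  intro hx. apply derivable_continuous_pt.
  exists (y * Rpower x (y - 1)). now apply derivable_pt_lim_power.
Qed.

Lemma rpow_cpt (q x : R) : 1 <= q -> continuity_pt (fun y => rpow y q) x.
Proof.
  intro hq.
  destruct (Rlt_or_le 0 x) as [hx|hx].
  - apply continuity_pt_locally_ext with (f := fun z => Rpower z q) (a := x); auto.
    + intros y hy. unfold rpow. unfold Rdist in hy.
      destruct (Rle_dec y 0); [|reflexivity].
      apply Rabs_def2 in hy. lra.
    + now apply Rpower_cpt.
  - destruct (Rlt_or_le x 0) as [hx'|hx'].
    + apply continuity_pt_locally_ext with (f := fun _ => 0) (a := - x).
      * lra.
      * intros y hy. unfold rpow. unfold Rdist in hy.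
        apply Rabs_def2 in hy. destruct (Rle_dec y 0); [reflexivity|lra].
      * apply continuity_pt_const. intros a b; reflexivity.
    + assert (x = 0) by lra. subst x.
      apply continuity_pt_locally. intro eps.
      exists (mkposreal (Rmin eps 1) ltac:(apply Rmin_pos; [apply cond_pos|lra])).
      intros u hu. change (Rabs (u - 0) < Rmin eps 1) in hu.
      assert (h0 : rpow 0 q = 0) by (unfold rpow; destruct (Rle_dec 0 0); lra).
      rewrite h0, Rminus_0_r.
      rewrite Rminus_0_r in hu.
      assert (hm1 := Rmin_r eps 1). assert (hm2 := Rmin_l eps 1).
      apply Rabs_def2 in hu.
      unfold rpow. destruct (Rle_dec u 0).
      * rewrite Rabs_R0. apply cond_pos.
      * assert (Rpower u q <= u).
        { unfold Rpower. rewrite <- (exp_ln u) at 2 by lra.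
          apply exp_le'. assert (ln u < 0) by (rewrite <- ln_1; apply ln_increasing; lra).
          nra. }
        assert (0 < Rpower u q) by (unfold Rpower; apply exp_pos).
        rewrite Rabs_pos_eq; lra.
Qed.

Definition Cont (f : R -> R) := forall x, continuous f x.

Lemma cont_ex f a b : Cont f -> ex_RInt f a b.
Proof. intro h; apply (ex_RInt_continuous (V := R_CompleteNormedModule)); intros; apply h. Qed.

Lemma Cont_plus f g : Cont f -> Cont g -> Cont (fun x => f x + g x).
Proof. intros hf hg x. apply (continuous_plus f g x); auto. Qed.
Lemma Cont_minus f g : Cont f -> Cont g -> Cont (fun x => f x - g x).
Proof. intros hf hg x. apply (continuous_minus f g x); auto. Qed.
Lemma Cont_mult f g : Cont f -> Cont g -> Cont (fun x => f x * g x).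
Proof. intros hf hg x. apply (continuous_mult f g x); auto. Qed.
Lemma Cont_lin f u v : Cont f -> Cont (fun x => f (u * x + v)).
Proof.
  intros hf x. apply (continuous_comp (fun x => u * x + v) f x); [|apply hf].
  apply (continuous_plus (fun x => u * x) (fun _ => v)); [|apply continuous_const].
  apply (continuous_mult (fun _ => u) (fun x => x)); [apply continuous_const|apply continuous_id].
Qed.
Lemma Cont_ext f g : (forall x, f x = g x) -> Cont f -> Cont g.
Proof. intros e hf x. apply (continuous_ext f g); auto. Qed.
Lemma Cont_shift f c : Cont f -> Cont (fun x => f (x + c)).
Proof. intro h. apply (Cont_ext (fun x => f (1 * x + c))). intro; f_equal; ring. now apply Cont_lin. Qed.
Lemma Cont_refl f c : Cont f -> Cont (fun x => f (c - x)).
Proof. intro h. apply (Cont_ext (fun x => f (-1 * x + c))). intro; f_equal; ring. now apply Cont_lin. Qed.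

Lemma RInt_shift f c a b : Cont f ->
  RInt (fun x => f (x + c)) a b = RInt f (a + c) (b + c).
Proof.
  intro h. rewrite <- (Rmult_1_l a) at 2. rewrite <- (Rmult_1_l b) at 2.
  rewrite <- RInt_comp_lin by (apply cont_ex; auto).
  apply RInt_ext. intros x _. change (f (x + c) = 1 * f (1 * x + c)). rewrite Rmult_1_l. f_equal; ring.
Qed.

Lemma RInt_refl f c a b : Cont f ->
  RInt (fun x => f (c - x)) a b = RInt f (c - b) (c - a).
Proof.
  intro h.
  assert (e := RInt_comp_lin f (-1) c a b (cont_ex _ _ _ h)).
  assert (es : - RInt f (c - a) (c - b) = RInt f (c - b) (c - a))
    by (apply (opp_RInt_swap (V := R_CompleteNormedModule)); apply cont_ex; auto).
  replace (-1 * a + c) with (c - a) in e by ring. replace (-1 * b + c) with (c - b) in e by ring.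
  rewrite <- es, <- e.
  assert (eo := RInt_opp (V := R_CompleteNormedModule) (fun y => -1 * f (-1 * y + c)) a b).
  specialize (eo ltac:(apply (cont_ex (fun y => -1 * f (-1 * y + c)));
    apply Cont_mult; [intro; apply continuous_const| now apply Cont_lin])).
  change (RInt (fun x => - (-1 * f (-1 * x + c))) a b = - RInt (fun y => -1 * f (-1 * y + c)) a b) in eo.
  change (RInt (fun x => f (c - x)) a b = - RInt (fun y => scal (-1) (f (-1 * y + c))) a b).
  change (scal (-1) ?z) with (-1 * z).
  rewrite <- eo.
  apply RInt_ext. intros x _. replace (-1 * x + c) with (c - x) by ring. unfold opp; simpl. ring.
Qed.

Lemma RInt_periodic f T c : Cont f -> (forall x, f (x + T) = f x) ->
  RInt f c (c + T) = RInt f 0 T.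
Proof.
  intros h p.
  assert (e1 : RInt f c 0 + RInt f 0 (c + T) = RInt f c (c + T))
    by (apply (RInt_Chasles (V := R_CompleteNormedModule)); apply cont_ex; auto).
  assert (e2 : RInt f 0 T + RInt f T (c + T) = RInt f 0 (c + T))
    by (apply (RInt_Chasles (V := R_CompleteNormedModule)); apply cont_ex; auto).
  assert (e3 : RInt f T (c + T) = RInt f 0 c).
  { transitivity (RInt (fun x => f (x + T)) 0 c).
    - rewrite RInt_shift by auto. f_equal; ring.
    - apply RInt_ext. intros; apply p. }
  assert (e4 : RInt f c 0 = - RInt f 0 c).
  { symmetry. apply (opp_RInt_swap (V := R_CompleteNormedModule)). apply cont_ex; auto. }
  lra.
Qed.

Lemma Jrepr w g (cw : Cont w) (cg : Cont g) (pw : forall x, w (x + 2*PI) = w x)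
  (pg : forall x, g (x + PI) = g x) b m :
  RInt (fun t => w t * g (t - b)) (-PI) PI =
  RInt (fun t => (w t + w (t + PI)) * g (t - b)) (m - PI/2) (m + PI/2).
Proof.
  pose (h := fun t => w t * g (t - b)).
  assert (ch : Cont h) by (apply Cont_mult; [auto| exact (Cont_shift g (-b) cg)]).
  pose (H := fun t => (w t + w (t + PI)) * g (t - b)).
  assert (cH : Cont H).
  { apply Cont_mult; [apply Cont_plus; [auto| now apply Cont_shift] | exact (Cont_shift g (-b) cg)]. }
  assert (e1 : RInt h (-PI) 0 + RInt h 0 PI = RInt h (-PI) PI)
    by (apply (RInt_Chasles (V := R_CompleteNormedModule)); apply cont_ex; auto).
  assert (e2 : RInt h 0 PI = RInt (fun x => h (x + PI)) (-PI) 0).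
  { rewrite RInt_shift by auto. f_equal; ring. }
  assert (e3 : RInt h (-PI) 0 + RInt (fun x => h (x + PI)) (-PI) 0 = RInt H (-PI) 0).
  { assert (ep := RInt_plus (V := R_CompleteNormedModule) h (fun x => h (x + PI)) (-PI) 0
       (cont_ex _ _ _ ch) (cont_ex _ _ _ (Cont_shift h PI ch))).
    change (RInt (fun x => h x + h (x + PI)) (-PI) 0 = RInt h (-PI) 0 + RInt (fun x => h (x + PI)) (-PI) 0) in ep.
    rewrite <- ep.
    apply RInt_ext. intros x _. unfold h, H. change (plus ?a ?b) with (a + b).
    replace (x + PI - b) with ((x - b) + PI) by ring. rewrite pg. symmetry; apply Rmult_plus_distr_r. }
  assert (pH : forall x, H (x + PI) = H x).
  { intro x. unfold H. replace (x + PI + PI) with (x + 2 * PI) by ring. rewrite pw.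
    replace (x + PI - b) with ((x - b) + PI) by ring. rewrite pg; try ring. }
  assert (e4 : RInt H (-PI) (-PI + PI) = RInt H 0 PI) by (apply RInt_periodic; auto).
  assert (e5 : RInt H (m - PI/2) (m - PI/2 + PI) = RInt H 0 PI) by (apply RInt_periodic; auto).
  replace (-PI + PI) with 0 in e4 by ring. replace (m - PI/2 + PI) with (m + PI/2) in e5 by field.
  fold h H. lra.
Qed.

Lemma RInt_plusR f g a b : Cont f -> Cont g ->
  RInt (fun x => f x + g x) a b = RInt f a b + RInt g a b.
Proof. intros hf hg. exact (RInt_plus (V := R_CompleteNormedModule) f g a b (cont_ex _ _ _ hf) (cont_ex _ _ _ hg)). Qed.
Lemma RInt_minusR f g a b : Cont f -> Cont g ->
  RInt (fun x => f x - g x) a b = RInt f a b - RInt g a b.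
Proof. intros hf hg. exact (RInt_minus (V := R_CompleteNormedModule) f g a b (cont_ex _ _ _ hf) (cont_ex _ _ _ hg)). Qed.

Lemma RInt_comb4 f1 f2 f3 f4 a b : Cont f1 -> Cont f2 -> Cont f3 -> Cont f4 ->
  RInt (fun x => f1 x - f2 x - f3 x + f4 x) a b
  = RInt f1 a b - RInt f2 a b - RInt f3 a b + RInt f4 a b.
Proof.
  intros h1 h2 h3 h4.
  rewrite (RInt_plusR (fun x => f1 x - f2 x - f3 x) f4) by
    (try apply Cont_minus; try apply Cont_minus; auto).
  rewrite (RInt_minusR (fun x => f1 x - f2 x) f3) by (try apply Cont_minus; auto).
  rewrite (RInt_minusR f1 f2) by auto. reflexivity.
Qed.

Lemma Jdiff w g (cw : Cont w) (cg : Cont g) (pw : forall x, w (x + 2*PI) = w x)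
  (pg : forall x, g (x + PI) = g x) (eg : forall x, g (- x) = g x) b1 b2 :
  2 * (RInt (fun t => w t * g (t - b2)) (-PI) PI - RInt (fun t => w t * g (t - b1)) (-PI) PI)
  = RInt (fun t => ((w t + w (t + PI)) - (w (b1 + b2 - t) + w (b1 + b2 - t + PI)))
                    * (g (t - b2) - g (t - b1)))
      ((b1 + b2)/2 - PI/2) ((b1 + b2)/2 + PI/2).
Proof.
  pose (G := fun t => w t + w (t + PI)).
  assert (cG : Cont G) by (apply Cont_plus; [auto| now apply Cont_shift]).
  pose (m := (b1 + b2)/2). pose (c := b1 + b2).
  fold m.
  assert (cgb : forall b, Cont (fun t => g (t - b))) by (intro b; exact (Cont_shift g (-b) cg)).
  assert (refl : forall F, Cont F -> RInt (fun t => F (c - t)) (m - PI/2) (m + PI/2) = RInt F (m - PI/2) (m + PI/2)).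
  { intros F hF. rewrite RInt_refl by auto. f_equal; unfold c, m; field. }
  assert (R1 : RInt (fun t => w t * g (t - b2)) (-PI) PI = RInt (fun t => G t * g (t - b2)) (m - PI/2) (m + PI/2))
    by (apply Jrepr; auto).
  assert (R2 : RInt (fun t => w t * g (t - b1)) (-PI) PI = RInt (fun t => G t * g (t - b1)) (m - PI/2) (m + PI/2))
    by (apply Jrepr; auto).
  assert (R3 : RInt (fun t => G t * g (t - b2)) (m - PI/2) (m + PI/2) = RInt (fun t => G (c - t) * g (t - b1)) (m - PI/2) (m + PI/2)).
  { rewrite <- (refl (fun t => G t * g (t - b2))) by (apply Cont_mult; auto).
    apply RInt_ext. intros x _. f_equal. rewrite <- eg. f_equal. unfold c; ring. }
  assert (R4 : RInt (fun t => G t * g (t - b1)) (m - PI/2) (m + PI/2) = RInt (fun t => G (c - t) * g (t - b2)) (m - PI/2) (m + PI/2)).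
  { rewrite <- (refl (fun t => G t * g (t - b1))) by (apply Cont_mult; auto).
    apply RInt_ext. intros x _. f_equal. rewrite <- eg. f_equal. unfold c; ring. }
  assert (cGc : Cont (fun t => G (c - t))) by (now apply Cont_refl).
  rewrite (RInt_ext (fun t => ((w t + w (t + PI)) - (w (b1 + b2 - t) + w (b1 + b2 - t + PI))) * (g (t - b2) - g (t - b1))) (fun t => G t * g (t - b2) - G t * g (t - b1) - G (c - t) * g (t - b2) + G (c - t) * g (t - b1))).
  2:{ intros x _. unfold G, c; match goal with |- ?a = ?b => change (@eq R a b) end; ring. }
  rewrite RInt_comb4 by (apply Cont_mult; auto).
  lra.
Qed.
Lemma Rpower_le_neg a b e : 0 < a <= b -> e <= 0 -> Rpower b e <= Rpower a e.
Proof.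
  intros [ha hab] he. unfold Rpower. apply exp_le'.
  assert (ln a <= ln b) by (apply ln_le; lra). nra.
Qed.

Definition Phi A B ga y := Rpower (A - B * y) ga + Rpower (A + B * y) ga.

Lemma derive_aff A K ga y : 0 < A + K * y ->
  is_derive (fun y => Rpower (A + K * y) ga) y (K * (ga * Rpower (A + K * y) (ga - 1))).
Proof.
  intro h.
  apply (is_derive_comp (fun z => Rpower z ga) (fun y => A + K * y)).
  - apply is_derive_Reals. now apply derivable_pt_lim_power.
  - auto_derive; [exact I | ring].
Qed.

Lemma derive_Phi A B ga y : 0 < A - B * y -> 0 < A + B * y ->
  is_derive (Phi A B ga) y (ga * B * (Rpower (A + B * y) (ga - 1) - Rpower (A - B * y) (ga - 1))).
Proof.
  intros h1 h2.
  assert (d1 := derive_aff A (- B) ga y ltac:(lra)).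
  assert (d2 := derive_aff A B ga y h2).
  replace (A + - B * y) with (A - B * y) in d1 by ring.
  assert (d := is_derive_plus _ _ y _ _ d1 d2).
  unfold Phi.
  eapply is_derive_ext; [| replace (ga * B * (Rpower (A + B * y) (ga - 1) - Rpower (A - B * y) (ga - 1))) with
     (plus (- B * (ga * Rpower (A - B * y) (ga - 1))) (B * (ga * Rpower (A + B * y) (ga - 1))))
   by (unfold plus; simpl; ring); exact d].
  intro t. simpl. unfold plus; simpl. f_equal. f_equal. ring.
Qed.

Lemma Phi_diff A B ga (hB : 0 <= B) (hAB : B < A) y1 y2 : 0 <= y1 <= y2 -> y2 <= 1 ->
  exists c, 0 <= c <= 1 /\ Phi A B ga y2 - Phi A B ga y1 =
     ga * B * (Rpower (A + B * c) (ga - 1) - Rpower (A - B * c) (ga - 1)) * (y2 - y1).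
Proof.
  intros hy hy2.
  assert (hpos : forall c, 0 <= c <= 1 -> 0 < A - B * c /\ 0 < A + B * c) by (intros; split; nra).
  destruct (MVT_gen (Phi A B ga) y1 y2
     (fun c => ga * B * (Rpower (A + B * c) (ga - 1) - Rpower (A - B * c) (ga - 1)))) as [c [hc e]].
  - intros x hx. rewrite Rmin_left in hx by lra. rewrite Rmax_right in hx by lra.
    destruct (hpos x) as [p1 p2]; [lra|]. now apply derive_Phi.
  - intros x hx. rewrite Rmin_left in hx by lra. rewrite Rmax_right in hx by lra.
    destruct (hpos x) as [p1 p2]; [lra|]. apply continuity_pt_filterlim.
    assert (hc : continuous (Phi A B ga) x).
    { apply (ex_derive_continuous (K := R_AbsRing) (V := R_NormedModule)). eexists. now apply derive_Phi. }
    exact hc.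
  - rewrite Rmin_left in hc by lra. rewrite Rmax_right in hc by lra.
    exists c. split; [lra|exact e].
Qed.

Lemma Phi_anti A B ga (hB : 0 <= B) (hAB : B < A) : 0 < ga < 1 ->
  forall y1 y2, 0 <= y1 <= y2 -> y2 <= 1 -> Phi A B ga y2 <= Phi A B ga y1.
Proof.
  intros hg y1 y2 hy hy2. destruct (Phi_diff A B ga hB hAB y1 y2 hy hy2) as [c [hc e]].
  assert (Rpower (A + B * c) (ga - 1) <= Rpower (A - B * c) (ga - 1))
    by (apply Rpower_le_neg; nra).
  assert (0 <= ga * B) by nra.
  assert (ga * B * (Rpower (A + B * c) (ga - 1) - Rpower (A - B * c) (ga - 1)) <= 0) by nra.
  nra.
Qed.

Lemma Phi_mono A B ga (hB : 0 <= B) (hAB : B < A) : ga < 0 \/ 1 < ga ->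
  forall y1 y2, 0 <= y1 <= y2 -> y2 <= 1 -> Phi A B ga y1 <= Phi A B ga y2.
Proof.
  intros hg y1 y2 hy hy2. destruct (Phi_diff A B ga hB hAB y1 y2 hy hy2) as [c [hc e]].
  assert (0 <= ga * B * (Rpower (A + B * c) (ga - 1) - Rpower (A - B * c) (ga - 1))).
  { destruct hg as [hg|hg].
    - assert (Rpower (A + B * c) (ga - 1) <= Rpower (A - B * c) (ga - 1))
        by (apply Rpower_le_neg; nra).
      assert (ga * B <= 0) by nra. nra.
    - assert (Rpower (A - B * c) (ga - 1) <= Rpower (A + B * c) (ga - 1))
        by (apply Rle_Rpower_l; nra).
      assert (0 <= ga * B) by nra. nra. }
  nra.
Qed.

Lemma trig1 m u : cos (m - u) ^ 2 - cos (m + u) ^ 2 = sin (2 * m) * sin (2 * u).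
Proof. rewrite cos_minus, cos_plus, !sin_2a. ring. Qed.

Lemma abs_sq_le a b : a ^ 2 <= b ^ 2 -> Rabs a <= Rabs b.
Proof.
  intro h. rewrite <- (pow2_abs a), <- (pow2_abs b) in h.
  assert (0 <= Rabs a) by apply Rabs_pos. assert (0 <= Rabs b) by apply Rabs_pos. nra.
Qed.

Lemma abs_cos_01 x : 0 <= Rabs (cos x) <= 1.
Proof. split; [apply Rabs_pos|]. destruct (COS_bound x). apply Rabs_le; lra. Qed.

Lemma sign_core (P Q : R -> R)
  (hP : forall y1 y2, 0 <= y1 <= y2 -> y2 <= 1 -> P y2 <= P y1)
  (hQ : forall y1 y2, 0 <= y1 <= y2 -> y2 <= 1 -> Q y1 <= Q y2)
  b1 b2 t : 0 <= b1 -> b1 <= b2 -> b2 <= PI / 2 ->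
  0 <= (P (Rabs (cos t)) - P (Rabs (cos (b1 + b2 - t))))
       * (Q (Rabs (cos (t - b2))) - Q (Rabs (cos (t - b1)))).
Proof.
  intros h1 h2 h3.
  pose (m := (b1 + b2) / 2). pose (u := t - m). pose (d := (b2 - b1) / 2).
  assert (PI > 0) by apply PI_RGT_0.
  assert (sm : 0 <= sin (2 * m)) by (apply sin_ge_0; unfold m; lra).
  assert (sd : 0 <= sin (2 * d)) by (apply sin_ge_0; unfold d; lra).
  assert (E1 : cos (b1 + b2 - t) ^ 2 - cos t ^ 2 = sin (2 * m) * sin (2 * u)).
  { assert (T := trig1 m u).
    replace (m - u) with (b1 + b2 - t) in T by (unfold u, m; field).
    replace (m + u) with t in T by (unfold u, m; field). exact T. }
  assert (E2 : cos (t - b2) ^ 2 - cos (t - b1) ^ 2 = sin (2 * u) * sin (2 * d)).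
  { replace (t - b2) with (u - d) by (unfold u, m, d; field).
    replace (t - b1) with (u + d) by (unfold u, m, d; field).
    apply trig1. }
  pose proof (abs_cos_01 t). pose proof (abs_cos_01 (b1 + b2 - t)).
  pose proof (abs_cos_01 (t - b2)). pose proof (abs_cos_01 (t - b1)).
  destruct (Rle_or_lt 0 (sin (2 * u))) as [su|su].
  - assert (a1 : Rabs (cos t) <= Rabs (cos (b1 + b2 - t))) by (apply abs_sq_le; nra).
    assert (a2 : Rabs (cos (t - b1)) <= Rabs (cos (t - b2))) by (apply abs_sq_le; nra).
    assert (P (Rabs (cos (b1 + b2 - t))) <= P (Rabs (cos t))) by (apply hP; lra).
    assert (Q (Rabs (cos (t - b1))) <= Q (Rabs (cos (t - b2)))) by (apply hQ; lra).
    nra.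
  - assert (a1 : Rabs (cos (b1 + b2 - t)) <= Rabs (cos t)) by (apply abs_sq_le; nra).
    assert (a2 : Rabs (cos (t - b2)) <= Rabs (cos (t - b1))) by (apply abs_sq_le; nra).
    assert (P (Rabs (cos t)) <= P (Rabs (cos (b1 + b2 - t)))) by (apply hP; lra).
    assert (Q (Rabs (cos (t - b2))) <= Q (Rabs (cos (t - b1)))) by (apply hQ; lra).
    nra.
Qed.

Definition wf (n : nat) (alpha q r s : R) (t : R) :=
  rpow (1 + s ^ 2 - 2 * r * s * cos t) ((INR n - alpha) * q / 2 - INR n + 1).
Definition gf (q : R) (x : R) := rpow (Rabs (cos x)) q.

Lemma Jint_eq n alpha q r s b :
  Jint n alpha b q r s = RInt (fun t => wf n alpha q r s t * gf q (t - b)) (-PI) PI.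
Proof. reflexivity. Qed.

Lemma cpt_cont f x : continuity_pt f x -> continuous f x.
Proof. intro h. now apply continuity_pt_filterlim. Qed.

Lemma cos_Cont : Cont cos.
Proof. intro x; apply continuous_cos. Qed.

Lemma RInt_oppR f a b : Cont f -> RInt (fun x => - f x) a b = - RInt f a b.
Proof.
  intro h.
  assert (eo := RInt_opp (V := R_CompleteNormedModule) f a b (cont_ex _ _ _ h)).
  exact eo.
Qed.

Lemma neg_helper a b y : 0 <= (- a - - b) * y -> 0 <= - ((a - b) * y).
Proof. intro h. replace (- ((a - b) * y)) with ((- a - - b) * y) by ring. exact h. Qed.

Lemma aff_pos r s y : 0 <= r < 1 -> 0 <= s < 1 -> 0 <= y <= 1 ->
  0 < 1 + s ^ 2 - 2 * r * s * y /\ 0 < 1 + s ^ 2 + 2 * r * s * y.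
Proof. intros hr hs hy. assert (0 <= r * s) by nra. assert (r * s * y <= r * s) by nra.
  assert (r * s <= s) by nra. split; nra. Qed.

Section Main.
Variables (n : nat) (alpha q r s : R).
Hypotheses (hq : 1 <= q) (hr : 0 <= r < 1) (hs : 0 <= s < 1).
Let ga := (INR n - alpha) * q / 2 - INR n + 1.
Let A := 1 + s ^ 2.
Let B := 2 * r * s.
Let w := wf n alpha q r s.
Let g := gf q.

Lemma base_pos t : 0 < 1 + s ^ 2 - 2 * r * s * cos t.
Proof.
  destruct (COS_bound t). assert (0 <= r * s) by nra.
  assert (r * s * cos t <= r * s) by nra. assert (r * s <= s) by nra. nra.
Qed.

Lemma w_eq t : w t = Rpower (1 + s ^ 2 - 2 * r * s * cos t) ga.
Proof. unfold w, wf, rpow. destruct (Rle_dec _ 0) as [h|h]; [|reflexivity]. pose proof (base_pos t). lra. Qed.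

Lemma cw : Cont w.
Proof.
  apply (Cont_ext (fun t => Rpower (1 + s ^ 2 - 2 * r * s * cos t) ga)); [intro; symmetry; apply w_eq|].
  intro x.
  apply (continuous_comp (fun t => 1 + s ^ 2 - 2 * r * s * cos t) (fun z => Rpower z ga)).
  - apply (Cont_minus (fun _ => 1 + s ^ 2) (fun t => 2 * r * s * cos t)).
    + intro; apply continuous_const.
    + apply (Cont_mult (fun _ => 2 * r * s) cos). intro; apply continuous_const. apply cos_Cont.
  - apply cpt_cont. apply Rpower_cpt. apply base_pos.
Qed.

Lemma cg : Cont g.
Proof.
  intro x. unfold g, gf.
  apply (continuous_comp (fun x => Rabs (cos x)) (fun y => rpow y q)).
  - apply (continuous_comp cos Rabs). apply continuous_cos. apply continuous_Rabs.
  - apply cpt_cont. now apply rpow_cpt.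
Qed.

Lemma pw x : w (x + 2 * PI) = w x.
Proof. unfold w, wf. rewrite cos_plus, cos_2PI, sin_2PI. f_equal. ring. Qed.

Lemma pg x : g (x + PI) = g x.
Proof. unfold g, gf. rewrite neg_cos, Rabs_Ropp. reflexivity. Qed.

Lemma eg x : g (- x) = g x.
Proof. unfold g, gf. rewrite cos_neg. reflexivity. Qed.

Lemma G_eq t : w t + w (t + PI) = Phi A B ga (Rabs (cos t)).
Proof.
  rewrite !w_eq, neg_cos. unfold Phi, A, B.
  destruct (Rle_or_lt 0 (cos t)) as [h|h].
  - rewrite Rabs_pos_eq by lra. f_equal; f_equal; ring.
  - rewrite Rabs_left by lra. rewrite Rplus_comm. f_equal; f_equal; ring.
Qed.

Lemma hB : 0 <= B.
Proof. unfold B. nra. Qed.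
Lemma hAB : B < A.
Proof. unfold A, B. nra. Qed.

Lemma gmono : forall y1 y2, 0 <= y1 <= y2 -> y2 <= 1 -> rpow y1 q <= rpow y2 q.
Proof.
  intros y1 y2 h1 h2. unfold rpow.
  destruct (Rle_dec y1 0); destruct (Rle_dec y2 0).
  - lra.
  - left; apply exp_pos.
  - lra.
  - apply Rle_Rpower_l; lra.
Qed.

Let J b := Jint n alpha b q r s.

Lemma cint b1 b2 : Cont (fun t => ((w t + w (t + PI)) - (w (b1 + b2 - t) + w (b1 + b2 - t + PI)))
                    * (g (t - b2) - g (t - b1))).
Proof.
  pose proof cw as hw. pose proof cg as hg.
  apply Cont_mult; apply Cont_minus.
  - apply Cont_plus; [auto| now apply Cont_shift].
  - apply Cont_plus; [now apply Cont_refl|].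
    apply (Cont_refl (fun x => w (x + PI))). now apply Cont_shift.
  - exact (Cont_shift g (-b2) hg).
  - exact (Cont_shift g (-b1) hg).
Qed.

Lemma Jdiff_main b1 b2 : 2 * (J b2 - J b1)
  = RInt (fun t => ((w t + w (t + PI)) - (w (b1 + b2 - t) + w (b1 + b2 - t + PI)))
                    * (g (t - b2) - g (t - b1)))
      ((b1 + b2)/2 - PI/2) ((b1 + b2)/2 + PI/2).
Proof.
  unfold J. rewrite !Jint_eq. apply Jdiff; [apply cw|apply cg|apply pw|apply pg|apply eg].
Qed.

Lemma L_le_U b1 b2 : (b1 + b2)/2 - PI/2 <= (b1 + b2)/2 + PI/2.
Proof. pose proof PI_RGT_0. lra. Qed.

Lemma J_const (hc : forall y1 y2, 0 <= y1 <= 1 -> 0 <= y2 <= 1 -> Phi A B ga y1 = Phi A B ga y2) b1 b2 :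
  J b1 = J b2.
Proof.
  assert (e := Jdiff_main b1 b2).
  rewrite (RInt_ext _ (fun _ => 0)) in e.
  - rewrite RInt_const in e. assert (Z : 2 * (J b2 - J b1) = 0) by (rewrite e; apply Rmult_0_r). lra.
  - intros x _. rewrite !G_eq. rewrite (hc (Rabs (cos x)) (Rabs (cos (b1 + b2 - x)))) by apply abs_cos_01.
    match goal with |- ?a = ?b => change (@eq R a b) end. ring.
Qed.

Lemma J_sym b : J (PI - b) = J b.
Proof.
  assert (e := Jdiff_main b (PI - b)).
  rewrite (RInt_ext _ (fun _ => 0)) in e.
  - rewrite RInt_const in e. assert (Z : 2 * (J (PI - b) - J b) = 0) by (rewrite e; apply Rmult_0_r). lra.
  - intros x _. rewrite !G_eq. replace (b + (PI - b) - x) with (PI - x) by ring.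
    rewrite Rtrigo_facts.cos_pi_minus, Rabs_Ropp.
    match goal with |- ?a = ?b => change (@eq R a b) end. ring.
Qed.

Lemma J_inc (ha : forall y1 y2, 0 <= y1 <= y2 -> y2 <= 1 -> Phi A B ga y2 <= Phi A B ga y1)
  b1 b2 : 0 <= b1 -> b1 <= b2 -> b2 <= PI / 2 -> J b1 <= J b2.
Proof.
  intros h1 h2 h3.
  assert (e := Jdiff_main b1 b2).
  assert (0 <= RInt (fun t => ((w t + w (t + PI)) - (w (b1 + b2 - t) + w (b1 + b2 - t + PI)))
                    * (g (t - b2) - g (t - b1)))
      ((b1 + b2)/2 - PI/2) ((b1 + b2)/2 + PI/2)).
  { apply RInt_ge_0; [apply L_le_U| apply cont_ex, cint|].
    intros x _. rewrite !G_eq. unfold g, gf.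
    apply (sign_core (Phi A B ga) (fun y => rpow y q)); auto. apply gmono. }
  lra.
Qed.

Lemma J_dec (hm : forall y1 y2, 0 <= y1 <= y2 -> y2 <= 1 -> Phi A B ga y1 <= Phi A B ga y2)
  b1 b2 : 0 <= b1 -> b1 <= b2 -> b2 <= PI / 2 -> J b2 <= J b1.
Proof.
  intros h1 h2 h3.
  pose (F := fun t => ((w t + w (t + PI)) - (w (b1 + b2 - t) + w (b1 + b2 - t + PI)))
                    * (g (t - b2) - g (t - b1))).
  assert (cF : Cont F) by exact (cint b1 b2).
  assert (e : 2 * (J b2 - J b1) = RInt F ((b1 + b2)/2 - PI/2) ((b1 + b2)/2 + PI/2))
    by exact (Jdiff_main b1 b2).
  assert (H : 0 <= RInt (fun t => - F t) ((b1 + b2)/2 - PI/2) ((b1 + b2)/2 + PI/2)).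
  { apply RInt_ge_0; [apply L_le_U| |].
    - apply cont_ex. apply (Cont_ext (fun t => -1 * F t)).
      + intro x. ring.
      + apply (Cont_mult (fun _ => -1)); [intro; apply continuous_const| exact cF].
    - intros x _. unfold F. rewrite !G_eq. unfold g, gf.
      apply neg_helper.
      exact (sign_core (fun y => - Phi A B ga y) (fun y => rpow y q)
        (fun y1 y2 a b => Ropp_le_contravar _ _ (hm y1 y2 a b)) gmono b1 b2 x h1 h2 h3). }
  rewrite (RInt_oppR F) in H by exact cF.
  lra.
Qed.

End Main.

Theorem corollary2p1 (n : nat) (alpha q r s : R)
  (hn : (3 <= n)%nat) (halpha : alpha < 1) (hq : 1 <= q)
  (hr : 0 <= r < 1) (hs : 0 <= s < 1) :
  let q1 := (2 * INR n - 2) / (INR n - alpha) in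
  let q2 := 2 * INR n / (INR n - alpha) in
  let J := fun beta => Jint n alpha beta q r s in
  ((q = q1 \/ q = q2) ->
     forall b1 b2, 0 <= b1 <= PI -> 0 <= b2 <= PI -> J b1 = J b2)
  /\
  (q1 < q < q2 ->
     (forall b1 b2, 0 <= b1 -> b1 <= b2 -> b2 <= PI / 2 -> J b1 <= J b2)
     /\ (forall b, 0 <= b <= PI -> J b <= J (PI / 2)))
  /\
  ((q2 < q \/ q < q1) ->
     (forall b1 b2, 0 <= b1 -> b1 <= b2 -> b2 <= PI / 2 -> J b2 <= J b1)
     /\ (forall b, 0 <= b <= PI -> J b <= J 0)).
Proof.
  intros q1 q2 J.
  assert (hN : 3 <= INR n) by (apply le_INR in hn; simpl in hn; lra).
  assert (hD : 0 < INR n - alpha) by lra.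
  assert (e1 : q1 * (INR n - alpha) = 2 * INR n - 2) by (unfold q1; field; lra).
  assert (e2 : q2 * (INR n - alpha) = 2 * INR n) by (unfold q2; field; lra).
  pose (ga := (INR n - alpha) * q / 2 - INR n + 1).
  pose proof (PI_RGT_0) as hPI.
  assert (sym := J_sym n alpha q r s hq hr hs).
  assert (hB' := hB r s hr hs). assert (hAB' := hAB r s hr hs).
  split; [|split].
  - intros hqq b1 b2 _ _. unfold J. apply (J_const n alpha q r s hq hr hs).
    intros y1 y2 hy1 hy2. unfold Phi.
    assert (p : forall y, 0 <= y <= 1 -> 0 < 1 + s ^ 2 - 2 * r * s * y /\ 0 < 1 + s ^ 2 + 2 * r * s * y)
      by (intros; apply aff_pos; auto).
    destruct (p y1 hy1), (p y2 hy2).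
    destruct hqq as [hqq|hqq].
    + assert (E : (INR n - alpha) * q = 2 * INR n - 2) by (rewrite hqq, Rmult_comm; exact e1).
      replace ((INR n - alpha) * q / 2 - INR n + 1) with 0 by lra.
      rewrite !Rpower_O by lra. reflexivity.
    + assert (E : (INR n - alpha) * q = 2 * INR n) by (rewrite hqq, Rmult_comm; exact e2).
      replace ((INR n - alpha) * q / 2 - INR n + 1) with 1 by lra.
      rewrite !Rpower_1 by lra. ring.
  - intros [hq1 hq2].
    assert (q1 * (INR n - alpha) < q * (INR n - alpha)) by (apply Rmult_lt_compat_r; lra).
    assert (q * (INR n - alpha) < q2 * (INR n - alpha)) by (apply Rmult_lt_compat_r; lra).
    assert (ha : forall y1 y2, 0 <= y1 <= y2 -> y2 <= 1 ->
      Phi (1 + s ^ 2) (2 * r * s) ((INR n - alpha) * q / 2 - INR n + 1) y2 <=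
      Phi (1 + s ^ 2) (2 * r * s) ((INR n - alpha) * q / 2 - INR n + 1) y1).
    { apply Phi_anti; auto. lra. }
    assert (inc := J_inc n alpha q r s hq hr hs ha). unfold J.
    split; [exact inc|].
    intros b hb. destruct (Rle_or_lt b (PI / 2)).
    + apply inc; lra.
    + rewrite <- sym. apply inc; lra.
  - intros hqq.
    assert (hm : forall y1 y2, 0 <= y1 <= y2 -> y2 <= 1 ->
      Phi (1 + s ^ 2) (2 * r * s) ((INR n - alpha) * q / 2 - INR n + 1) y1 <=
      Phi (1 + s ^ 2) (2 * r * s) ((INR n - alpha) * q / 2 - INR n + 1) y2).
    { apply Phi_mono; auto. destruct hqq as [h|h].
      - right. assert (q2 * (INR n - alpha) < q * (INR n - alpha)) by (apply Rmult_lt_compat_r; lra). lra.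
      - left. assert (q * (INR n - alpha) < q1 * (INR n - alpha)) by (apply Rmult_lt_compat_r; lra). lra. }
    assert (dec := J_dec n alpha q r s hq hr hs hm). unfold J.
    split; [exact dec|].
    intros b hb. destruct (Rle_or_lt b (PI / 2)).
    + apply dec; lra.
    + rewrite <- sym. apply dec; lra.
Qed.
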